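(* For any finite families $(a_i)_{i\in I}$, $(a'_i)_{i\in I}$, $(b_j)_{j\in J}$ in $L$: (i) for every computation rule $\langle\cdot\rangle$, $\bigwedge_{i\in I}a_i\le\langle\bigoplus_{i\in I}a_i\rangle\le\bigvee_{i\in I}a_i$; (ii) the splitting rule $\langle\cdot\rangle^+_-$ and the strong rule $\langle\cdot\rangle_0$ are isotone: if $a_i\le a'_i$ for all $i\in I$, then $\langle\bigoplus_{i\in I}a_i\rangle\le\langle\bigoplus_{i\in I}a'_i\rangle$; (iii) for the splitting rule, either $|\langle(\bigoplus_{i\in I}a_i)\oplus(\bigoplus_{j\in J}b_j)\rangle^+_-|\ge|\langle\bigoplus_{i\in I}a_i\rangle^+_-|$ or $\langle(\bigoplus_{i\in I}a_i)\oplus(\bigoplus_{j\in J}b_j)\rangle^+_-=\mathbb{O}$, where the left-hand expression denotes the rule applied to the concatenated family of all $a_i$ and $b_j$.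
   Context: Let $(L^+,\le)$ be a totally ordered set with bottom $\mathbb{O}$ and top $\mathbb{1}$. Let $L^-=\{-a:a\in L^+\}$ be a disjoint copy with reversed order, $L=L^+\cup L^-$ with $-\mathbb{O}=\mathbb{O}$, totally ordered with $L^-$ below $L^+$; $-(-a)=a$; $|a|=a$ on $L^+$, $|a|=-a$ on $L^-$. Symmetric maximum: $a\oplus b=\mathbb{O}$ if $b=-a$, otherwise the one of $a,b$ with larger absolute value. A finite family $(a_i)_{i\in I}$ fulfills associativity if $|I|\le2$ or $\bigvee_i a_i\ne-\bigwedge_i a_i$; then $\bigoplus_{i\in I}a_i$ is independent of parenthesization (empty $\oplus$ is $\mathbb{O}$). A computation rule $\langle\cdot\rangle$ assigns to every finite family a set $J\subseteq I$ of deleted indices such that $(a_i)_{i\in I\setminus J}$ fulfills associativity and such that the deletion is the result of a suitable arrangement of parentheses in $\bigoplus_{i\in I}a_i$; $\langle\bigoplus_{i\in I}a_i\rangle:=\bigoplus_{i\in I\setminus J}a_i$. Splitting rule: deletes nothing if the family fulfills associativity, everything otherwise (equivalently, its value is $(\bigvee_{a_i\ge\mathbb{O}}a_i)\oplus(\bigwedge_{a_i<\mathbb{O}}a_i)$, empty sup/inf being $\mathbb{O}$). Strong rule: repeatedly deletes one occurrence of $a$ and one of $-a$, where $a=\bigvee a_i=-\bigwedge a_i$ in the current family, until associativity holds. *)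

(* Defs.v *)
From mathcomp Require Import all_boot all_order.
Set Implicit Arguments. Unset Strict Implicit. Unset Printing Implicit Defensive.
Import Order.TTheory.

Section SymMax.
Variables (d : Order.disp_t) (T : tbOrderType d).

(* L = L^+ U L^- : a pair (negative?, absolute value) with the invariant that
   a negative element has nonzero absolute value, so that -O = O. *)
Definition symL := {p : bool * T | p.1 ==> (p.2 != Order.bottom)}.

Lemma mkL_proof (s : bool) (t : T) :
  (s && (t != Order.bottom)) ==> (t != Order.bottom).
Proof. by case: s; case: (t != Order.bottom). Qed.

Definition mkL (s : bool) (t : T) : symL :=
  exist (fun p : bool * T => p.1 ==> (p.2 != Order.bottom))
        (s && (t != Order.bottom), t) (mkL_proof s t).

Definition sgnL (x : symL) : bool := (sval x).1.
Definition absL (x : symL) : T := (sval x).2.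

Definition zeroL : symL := mkL false Order.bottom.
Definition oppL (x : symL) : symL := mkL (~~ sgnL x) (absL x).

Definition leL (x y : symL) : bool :=
  match sgnL x, sgnL y with
  | false, false => (absL x <= absL y)%O
  | true, false => true
  | false, true => false
  | true, true => (absL y <= absL x)%O
  end.

Definition maxL (x y : symL) : symL := if leL x y then y else x.
Definition minL (x y : symL) : symL := if leL x y then x else y.

(* supremum / infimum of a finite family (list); empty sup/inf = O *)
Definition supL (s : seq symL) : symL :=
  match s with [::] => zeroL | x :: s' => foldr maxL x s' end.
Definition infL (s : seq symL) : symL :=
  match s with [::] => zeroL | x :: s' => foldr minL x s' end.

Definition symmax (a b : symL) : symL :=
  if b == oppL a then zeroL else if (absL a < absL b)%O then b else a.

Definition assocL (s : seq symL) : bool :=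
  (size s <= 2) || (supL s != oppL (infL s)).

(* iterated symmetric maximum (meaningful for associative families) *)
Definition bigsym (s : seq symL) : symL := foldr symmax zeroL s.

(* the value <+_{i in I} a_i> of a rule deleting the indices J *)
Definition rule_val (I : finType) (J : {set I}) (a : I -> symL) : symL :=
  bigsym (map a (enum (~: J))).

(* arrangements of parentheses: binary trees whose leaves are the indices *)
Inductive ptree (I : Type) := PLeaf of I | PNode of ptree I & ptree I.

Fixpoint leaves (I : Type) (t : ptree I) : seq I :=
  match t with PLeaf i => [:: i] | PNode l r => leaves l ++ leaves r end.

Fixpoint evalt (I : Type) (a : I -> symL) (t : ptree I) : symL :=
  match t with
  | PLeaf i => a i
  | PNode l r => symmax (evalt a l) (evalt a r)
  end.

(* indices not deleted by evaluating the tree: a node x (+) y with y = -x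
   deletes all indices below it *)
Fixpoint keptt (I : Type) (a : I -> symL) (t : ptree I) : seq I :=
  match t with
  | PLeaf i => [:: i]
  | PNode l r =>
      if evalt a r == oppL (evalt a l) then [::] else keptt a l ++ keptt a r
  end.

Definition is_comp_rule (rule : forall I : finType, (I -> symL) -> {set I}) :
  Prop :=
  forall (I : finType) (a : I -> symL),
    assocL (map a (enum (~: rule I a))) /\
    (#|I| = 0 \/
     exists t : ptree I,
       perm_eq (leaves t) (enum I) /\ rule I a = ~: [set i in keptt a t]).

Definition split_rule (I : finType) (a : I -> symL) : {set I} :=
  if assocL (map a (enum I)) then set0 else setT.

Definition strong_step (I : finType) (a : I -> symL) (K : {set I}) : {set I} :=
  let s := map a (enum K) in
  if assocL s then K else
  let m := supL s in
  match [pick i in K | a i == m] with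
  | Some i =>
      match [pick j in K | (j != i) && (a j == oppL m)] with
      | Some j => K :\ i :\ j
      | None => K
      end
  | None => K
  end.

Definition strong_rule (I : finType) (a : I -> symL) : {set I} :=
  ~: iter #|I| (strong_step a) setT.

Definition catfam (I J : finType) (a : I -> symL) (b : J -> symL)
  (x : I + J) : symL :=
  match x with inl i => a i | inr j => b j end.

End SymMax.

(* Main.v *)
Require Import Defs.
From mathcomp Require Import all_boot all_order all_algebra zify.
Set Implicit Arguments. Unset Strict Implicit. Unset Printing Implicit Defensive.
Import Order.TTheory GRing.Theory Num.Theory.

Section Aux.
Variables (d : Order.disp_t) (T : tbOrderType d).
Local Notation L := (symL T).
Local Notation bot := (@Order.bottom _ T).
Local Notation zero := (zeroL T).
Local Open Scope order_scope.

Definition PL (t : T) : L := mkL false t.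
Definition NL (t : T) : L := mkL true t.

Lemma sgn_abs (x : L) : sgnL x -> absL x != bot.
Proof. by case: x => [[s t] /= h]; rewrite /sgnL /absL /=; case: s h. Qed.

Lemma symL_eq (x y : L) : sgnL x = sgnL y -> absL x = absL y -> x = y.
Proof.
case: x => [[s t] h]; case: y => [[s' t'] h']; rewrite /sgnL /absL /= => e1 e2.
subst; congr exist; exact: bool_irrelevance.
Qed.

Lemma sgn_mkL s (t : T) : sgnL (mkL s t) = s && (t != bot). Proof. by []. Qed.
Lemma abs_mkL s (t : T) : absL (mkL s t) = t. Proof. by []. Qed.

Lemma mkL_eta (x : L) : x = mkL (sgnL x) (absL x).
Proof.
apply: symL_eq; rewrite ?sgn_mkL ?abs_mkL //.
by case: (boolP (sgnL x)) => // /sgn_abs ->.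
Qed.

Lemma sgn_zero : sgnL zero = false. Proof. by rewrite /zeroL sgn_mkL. Qed.
Lemma abs_zero : absL zero = bot. Proof. by []. Qed.

Lemma abs_bot (x : L) : absL x = bot -> x = zero.
Proof.
move=> h; apply: symL_eq; rewrite ?abs_zero ?sgn_zero //.
by case: (boolP (sgnL x)) => // /sgn_abs; rewrite h eqxx.
Qed.

Lemma sgn_opp (x : L) : sgnL (oppL x) = ~~ sgnL x && (absL x != bot).
Proof. by []. Qed.
Lemma abs_opp (x : L) : absL (oppL x) = absL x. Proof. by []. Qed.

Lemma oppK (x : L) : oppL (oppL x) = x.
Proof.
apply: symL_eq; rewrite ?abs_opp // !sgn_opp abs_opp.
case: (eqVneq (absL x) bot) => [/abs_bot -> | hne] //.
by case: (sgnL x).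
Qed.

Lemma opp_zero : oppL zero = zero.
Proof. by apply: abs_bot. Qed.

Lemma oppPL (t : T) : oppL (PL t) = NL t. Proof. by apply: symL_eq. Qed.
Lemma oppNL (t : T) : oppL (NL t) = PL t.
Proof. apply: symL_eq => //; rewrite sgn_opp /NL /PL !sgn_mkL abs_mkL. by case: (t != bot). Qed.

Lemma PL_NL_neq (t : T) : t != bot -> PL t != NL t.
Proof. by move=> h; apply/eqP => /(congr1 (@sgnL _ T)); rewrite !sgn_mkL h. Qed.

Lemma leL_refl (x : L) : leL x x.
Proof. by rewrite /leL; case: (sgnL x). Qed.

Lemma leL_trans (x y z : L) : leL x y -> leL y z -> leL x z.
Proof.
rewrite /leL; case: (sgnL x); case: (sgnL y); case: (sgnL z) => // h1 h2;
exact: le_trans h2 h1 || exact: le_trans h1 h2.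
Qed.

Lemma leL_total (x y : L) : leL x y || leL y x.
Proof. by rewrite /leL; case: (sgnL x); case: (sgnL y) => //; apply: le_total. Qed.

Lemma leL_anti (x y : L) : leL x y -> leL y x -> x = y.
Proof.
rewrite /leL; case hx: (sgnL x); case hy: (sgnL y) => // h1 h2;
apply: symL_eq; rewrite ?hx ?hy //; apply/le_anti; by rewrite h1 h2.
Qed.

Lemma leL_PL (M : T) (y : L) : leL (PL M) y -> ~~ sgnL y /\ M <= absL y.
Proof. by rewrite /leL sgn_mkL /=; case: (sgnL y). Qed.

Lemma leL_NL (M : T) (y : L) : M != bot -> leL y (NL M) -> sgnL y /\ M <= absL y.
Proof. by move=> hM; rewrite /leL sgn_mkL hM /=; case: (sgnL y). Qed.

Lemma NL_le0 (M : T) : leL (NL M) zero.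
Proof.
rewrite /leL ?sgn_mkL ?sgn_zero; case: (boolP (M != bot)) => //= /negPn /eqP ->.
by [].
Qed.

Lemma le0_PL (M : T) : leL zero (PL M).
Proof. by rewrite /leL ?sgn_mkL ?sgn_zero /= le0x. Qed.

Lemma PL_le (M : T) M' : M <= M' -> leL (PL M) (PL M').
Proof. by rewrite /leL !sgn_mkL. Qed.

Lemma NL_le (M : T) (M' : T) : M' <= M -> leL (NL M) (NL M').
Proof.
move=> h; rewrite /leL /NL !sgn_mkL !abs_mkL.
case: (eqVneq M bot) => [eM|nM]; case: (eqVneq M' bot) => [eM'|nM'] //=.
- by rewrite eM eM'.
- by move: h nM'; rewrite eM le_eqVlt ltx0 orbF => ->.
Qed.

Lemma le_PL (v : L) (t : T) : absL v <= t -> leL v (PL t).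
Proof. by rewrite /leL sgn_mkL /=; case: (sgnL v). Qed.

Lemma NL_le_abs (w : L) (t : T) : absL w <= t -> leL (NL t) w.
Proof.
move=> h; rewrite /leL sgn_mkL abs_mkL.
case: (boolP (t != bot)) => [ht|/negPn/eqP et] /=; first by case: (sgnL w).
subst t; have eb: absL w = bot by apply/le_anti; rewrite h le0x.
by rewrite (abs_bot eb) /leL ?sgn_zero /=.
Qed.

Lemma symmax_cases (x y : L) :
  symmax x y = x \/ symmax x y = y \/ (symmax x y = zero /\ y = oppL x).
Proof.
rewrite /symmax; case: eqP => [e|_]; first by right; right.
by case: ifP => _; tauto.
Qed.

Lemma symmax_x0 (x : L) : symmax x zero = x.
Proof.
rewrite /symmax; case: eqP => [e|_].
  by rewrite -(oppK x) -e opp_zero.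
by rewrite abs_zero ltx0.
Qed.

Lemma zero_between (x : L) :
  (leL x zero && leL zero (oppL x)) || (leL (oppL x) zero && leL zero x).
Proof.
rewrite /leL sgn_opp abs_opp ?sgn_zero abs_zero.
case: (sgnL x) => /=; first by rewrite le0x.
by case: eqVneq => [->|_] /=; rewrite ?lexx ?le0x ?orbT.
Qed.

Lemma symmax_in (lo hi x y : L) :
  leL lo x && leL x hi -> leL lo y && leL y hi ->
  leL lo (symmax x y) && leL (symmax x y) hi.
Proof.
move=> /andP[h1 h2] /andP[h3 h4].
case: (symmax_cases x y) => [->|[->|[-> e]]]; rewrite ?h1 ?h2 ?h3 ?h4 //.
subst y; case/orP: (zero_between x) => /andP[a b].
  by rewrite (leL_trans h1 a) (leL_trans b h4).
by rewrite (leL_trans h3 a) (leL_trans b h2).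
Qed.

Lemma bigsym_cons (x : L) s : bigsym (x :: s) = symmax x (bigsym s).
Proof. by []. Qed.

Lemma bigsym_in (lo hi : L) (s : seq L) :
  (forall x, x \in s -> leL lo x && leL x hi) ->
  (leL lo zero && leL zero hi) \/ s <> [::] ->
  leL lo (bigsym s) && leL (bigsym s) hi.
Proof.
elim: s => [|x s IH] hs; first by case.
move=> _; rewrite bigsym_cons.
have hx := hs x (mem_head _ _).
case: s IH hs => [|y s] IH hs; first by rewrite /= symmax_x0.
apply: symmax_in => //; apply: IH; last by right.
by move=> z hz; apply: hs; rewrite inE hz orbT.
Qed.

Lemma bigsym_mem (s : seq L) : bigsym s = zero \/ bigsym s \in s.
Proof.
elim: s => [|x s IH]; first by left.
rewrite bigsym_cons; case: (symmax_cases x (bigsym s)) => [->|[->|[-> _]]].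
- by right; rewrite mem_head.
- by case: IH => [->|h]; [left | right; rewrite inE h orbT].
- by left.
Qed.

Lemma abs_eq_opp (x : L) (s : bool) (M : T) : M != bot -> absL x = M ->
  x != mkL s M -> x = oppL (mkL s M).
Proof.
move=> hM hx hne; apply: symL_eq; rewrite ?abs_opp ?abs_mkL //.
rewrite sgn_opp !sgn_mkL abs_mkL hM !andbT.
move: hne; rewrite [x]mkL_eta hx; case: (sgnL x); case: s => //=; by rewrite eqxx.
Qed.

Lemma bigsym_top (s : seq L) (M : T) (sg : bool) : M != bot ->
  (forall x, x \in s -> absL x <= M) -> mkL sg M \in s ->
  oppL (mkL sg M) \notin s -> bigsym s = mkL sg M.
Proof.
move=> hM; elim: s => [|x s IH] //= hs hin hout.
have hs' : forall y, y \in s -> absL y <= M.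
  by move=> y hy; apply: hs; rewrite inE hy orbT.
have hout' : oppL (mkL sg M) \notin s.
  by apply: contra hout; rewrite inE => ->; rewrite orbT.
have hxo : x != oppL (mkL sg M).
  by apply: contra hout => /eqP <-; rewrite mem_head.
case: (eqVneq x (mkL sg M)) => [ex|nx].
- subst x; rewrite /symmax.
  have hb : absL (bigsym s) <= M.
    by case: (bigsym_mem s) => [->|h]; [rewrite abs_zero le0x | exact: hs'].
  case: eqP => [e|_].
    case: (bigsym_mem s) => [h|h].
      by move: (congr1 (@absL _ T) e); rewrite h abs_zero abs_opp abs_mkL => eM; move: hM; rewrite eM eqxx.
    by move: hout'; rewrite -e h.
  by rewrite abs_mkL ltNge hb.
- have hin' : mkL sg M \in s by move: hin; rewrite inE eq_sym (negPf nx).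
  rewrite IH // /symmax; case: eqP => [e|_].
    by move: hxo; rewrite -[x]oppK -e eqxx.
  case: ifP => // /negbT; rewrite -leNgt abs_mkL => hMx.
  have ex : absL x = M by apply/le_anti; rewrite hMx hs // mem_head.
  by move: hxo; rewrite (abs_eq_opp hM ex nx) eqxx.
Qed.

Lemma maxL_ge (x y : L) : leL x (maxL x y) && leL y (maxL x y).
Proof.
rewrite /maxL; case: ifP => h; first by rewrite h leL_refl.
by rewrite leL_refl; move: (leL_total x y); rewrite h.
Qed.
Lemma minL_le (x y : L) : leL (minL x y) x && leL (minL x y) y.
Proof.
rewrite /minL; case: ifP => h; first by rewrite h leL_refl.
by rewrite leL_refl andbT; move: (leL_total x y); rewrite h.
Qed.

Lemma foldr_maxL (x0 : L) s : foldr (@maxL _ T) x0 s \in x0 :: s /\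
  (forall y, y \in x0 :: s -> leL y (foldr (@maxL _ T) x0 s)).
Proof.
elim: s => [|x s [IH1 IH2]] /=.
  by split; [rewrite mem_head | move=> y; rewrite inE => /eqP ->; apply: leL_refl].
have /andP[h1 h2] := maxL_ge x (foldr (@maxL _ T) x0 s).
split.
  rewrite /maxL; case: ifP => _; first by move: IH1; rewrite !inE => /orP[->|->]; rewrite ?orbT.
  by rewrite !inE eqxx orbT.
move=> y; rewrite !inE => /or3P[/eqP->|/eqP->|hy].
- exact: leL_trans (IH2 _ (mem_head _ _)) h2.
- exact: h1.
- by apply: leL_trans (IH2 _ _) h2; rewrite inE hy orbT.
Qed.

Lemma foldr_minL (x0 : L) s : foldr (@minL _ T) x0 s \in x0 :: s /\
  (forall y, y \in x0 :: s -> leL (foldr (@minL _ T) x0 s) y).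
Proof.
elim: s => [|x s [IH1 IH2]] /=.
  by split; [rewrite mem_head | move=> y; rewrite inE => /eqP ->; apply: leL_refl].
have /andP[h1 h2] := minL_le x (foldr (@minL _ T) x0 s).
split.
  rewrite /minL; case: ifP => _; last by move: IH1; rewrite !inE => /orP[->|->]; rewrite ?orbT.
  by rewrite !inE eqxx orbT.
move=> y; rewrite !inE => /or3P[/eqP->|/eqP->|hy].
- exact: leL_trans h2 (IH2 _ (mem_head _ _)).
- exact: h1.
- by apply: leL_trans h2 (IH2 _ _); rewrite inE hy orbT.
Qed.

Lemma supL_prop (s : seq L) : s != [::] ->
  supL s \in s /\ (forall y, y \in s -> leL y (supL s)).
Proof. by case: s => // x s _; exact: foldr_maxL. Qed.
Lemma infL_prop (s : seq L) : s != [::] ->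
  infL s \in s /\ (forall y, y \in s -> leL (infL s) y).
Proof. by case: s => // x s _; exact: foldr_minL. Qed.

Lemma assoc_top (s : seq L) (M : T) (sg : bool) : M != bot ->
  (forall x, x \in s -> absL x <= M) -> mkL sg M \in s ->
  oppL (mkL sg M) \notin s -> assocL s.
Proof.
move=> hM hs hin hout; rewrite /assocL; apply/orP; right; apply/eqP => e.
have ne : s != [::] by case: s hin hs hout e.
have [sin sge] := supL_prop ne; have [iin ile] := infL_prop ne.
case: sg hin hout => hin hout.
- have [h1 h2] := leL_NL hM (ile _ hin).
  have ei : infL s = mkL true M.
    apply: symL_eq; first by rewrite h1 sgn_mkL hM.
    by apply/le_anti; rewrite h2 hs.
  by move: hout; rewrite -ei -e sin.
- have [h1 h2] := leL_PL (sge _ hin).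
  have es : supL s = mkL false M.
    apply: symL_eq; first by rewrite (negPf h1) sgn_mkL.
    by apply/le_anti; rewrite h2 hs.
  by move: hout; rewrite -es e oppK iin.
Qed.

Lemma assoc_both (s : seq L) (M : T) : M != bot ->
  (forall x, x \in s -> absL x <= M) -> PL M \in s -> NL M \in s ->
  assocL s -> bigsym s = zero /\ (s = [:: PL M; NL M] \/ s = [:: NL M; PL M]).
Proof.
move=> hM hs hP hN.
have ne : s != [::] by case: s hP hs hN.
have [sin sge] := supL_prop ne; have [iin ile] := infL_prop ne.
have es : supL s = PL M.
  have [h1 h2] := leL_PL (sge _ hP).
  apply: symL_eq; first by rewrite (negPf h1) sgn_mkL.
  by apply/le_anti; rewrite h2 hs.
have ei : infL s = NL M.
  have [h1 h2] := leL_NL hM (ile _ hN).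
  apply: symL_eq; first by rewrite h1 sgn_mkL hM.
  by apply/le_anti; rewrite h2 hs.
rewrite /assocL es ei oppNL eqxx orbF.
have hPN := PL_NL_neq hM.
case: s hP hN {hs ne sin sge iin ile es ei} => [|x [|y [|z s]]] //.
- by rewrite !inE => /eqP <- /eqP e; move: hPN; rewrite e eqxx.
- rewrite !inE => /orP[]/eqP ex /orP[]/eqP ey _; subst.
  + by move: hPN; rewrite ey eqxx.
  + by split; [rewrite bigsym_cons /= symmax_x0 /symmax oppPL eqxx | left].
  + by split; [rewrite bigsym_cons /= symmax_x0 /symmax oppNL eqxx | right].
  + by move: hPN; rewrite ey eqxx.
Qed.

Definition maxabs (s : seq L) : T := foldr (fun x m => Order.max (absL x) m) bot s.

Lemma maxabs_ge (s : seq L) x : x \in s -> absL x <= maxabs s.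
Proof.
elim: s => // y s IH; rewrite inE => /orP[/eqP->|h] /=; rewrite le_max ?lexx //.
by rewrite IH // orbT.
Qed.

Lemma maxabs_att (s : seq L) : maxabs s = bot \/ exists2 x, x \in s & absL x = maxabs s.
Proof.
elim: s => [|y s IH]; first by left.
change (maxabs (y :: s)) with (Order.max (absL y) (maxabs s)).
case: (leP (absL y) (maxabs s)) => h.
  case: IH => [->|[x hx ex]]; first by left.
  by right; exists x; rewrite // inE hx orbT.
by right; exists y; rewrite ?mem_head.
Qed.

Lemma maxabs_NL (s : seq L) : maxabs s != bot -> PL (maxabs s) \notin s ->
  NL (maxabs s) \in s.
Proof.
move=> hM hP; case: (maxabs_att s) => [e|[x hx ex]]; first by move: hM; rewrite e eqxx.
case: (eqVneq x (PL (maxabs s))) => [e|nx]; first by move: hP; rewrite -e hx.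
by move: hx; rewrite (abs_eq_opp hM ex nx); change (mkL false (maxabs s)) with (PL (maxabs s)); rewrite oppPL.
Qed.

Lemma all_zero (s : seq L) : maxabs s = bot -> forall x, x \in s -> x = zero.
Proof.
move=> h x hx; apply: abs_bot; apply/le_anti; rewrite le0x andbT -h.
exact: maxabs_ge.
Qed.

Definition spv (s : seq L) : L :=
  let M := maxabs s in
  if M == bot then zero else
  if PL M \in s then (if NL M \in s then zero else PL M) else NL M.

Lemma split_spv (s : seq L) : (if assocL s then bigsym s else zero) = spv s.
Proof.
rewrite /spv; set M := maxabs s.
case: eqVneq => [hM|hM].
  have hz := all_zero hM; case: ifP => // _.
  by case: (bigsym_mem s) => // h; apply: hz.
have hs : forall x, x \in s -> absL x <= M by move=> x; apply: maxabs_ge.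
case hP: (PL M \in s).
  case hN: (NL M \in s).
    case: ifP => ha //; by case: (assoc_both hM hs hP hN ha).
  have hN' : oppL (mkL false M) \notin s.
    by change (mkL false M) with (PL M); rewrite oppPL hN.
  by rewrite (assoc_top hM hs hP hN') (bigsym_top hM hs hP hN').
have hN := maxabs_NL hM (negbT hP).
have hP' : oppL (mkL true M) \notin s.
  by change (mkL true M) with (NL M); rewrite oppNL hP.
by rewrite (assoc_top hM hs hN hP') (bigsym_top hM hs hN hP').
Qed.

Lemma spv_abs (s : seq L) : absL (spv s) <= maxabs s /\
  (spv s != zero -> absL (spv s) = maxabs s).
Proof.
rewrite /spv; case: eqVneq => [->|hM]; first by rewrite abs_zero lexx eqxx.
by case: ifP => _; [case: ifP => _ |]; rewrite ?abs_zero ?le0x ?eqxx // abs_mkL lexx.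
Qed.

Section Fam.
Variable I : finType.

Lemma memI (f : I -> L) x : x \in map f (enum I) -> exists i, f i = x.
Proof. by case/mapP => i _ ->; exists i. Qed.
Lemma memI' (f : I -> L) i : f i \in map f (enum I).
Proof. by apply: map_f; rewrite mem_enum. Qed.

Lemma spv_mono (a a' : I -> L) : (forall i, leL (a i) (a' i)) ->
  leL (spv (map a (enum I))) (spv (map a' (enum I))).
Proof.
move=> ha; set s := map a (enum I); set s' := map a' (enum I).
rewrite /spv; set M := maxabs s; set M' := maxabs s'.
have hb : forall i, absL (a i) <= M by move=> i; apply: maxabs_ge; apply: memI'.
have hb' : forall i, absL (a' i) <= M' by move=> i; apply: maxabs_ge; apply: memI'.
have wpos : (M == bot) || ((PL M \in s) && (NL M \in s)) ->
    leL zero (if M' == bot then zero else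
      if PL M' \in s' then (if NL M' \in s' then zero else PL M') else NL M').
  move=> hv; case: eqVneq => hM'; first exact: leL_refl.
  case: ifP => hP'; first by case: ifP => _; [apply: leL_refl | apply: le0_PL].
  have [j ej] := memI (maxabs_NL hM' (negbT hP')).
  move: (ha j); rewrite ej => /(leL_NL hM') [sj hj].
  case/orP: hv => [/eqP hM | /andP[hP hN]].
    by move: hM'; have := le_trans hj (hb j); rewrite hM le_eqVlt ltx0 orbF => /eqP ->; rewrite eqxx.
  have [i ei] := memI hP.
  move: (ha i); rewrite ei => /leL_PL [si hi].
  have e1 : absL (a' i) = M'.
    apply/le_anti; rewrite hb' /=.
    exact: le_trans hj (le_trans (hb j) hi).
  have : a' i = PL M' by apply: symL_eq; rewrite ?e1 // sgn_mkL (negPf si).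
  by move=> e; move: hP'; rewrite -e memI'.
case: eqVneq => hM; first by apply: wpos; rewrite hM eqxx.
case: ifP => hP.
  case: ifP => hN; first by apply: wpos; rewrite hP hN orbT.
  have [i ei] := memI hP.
  move: (ha i); rewrite ei => /leL_PL [si hi].
  have hMM : M <= M' := le_trans hi (hb' i).
  have hM' : M' != bot.
    by apply: contra hM => /eqP e; move: hMM; rewrite e le_eqVlt ltx0 orbF.
  rewrite (negPf hM').
  have contraN : NL M' \in s' -> False.
    move=> hN'; have [j ej] := memI hN'.
    move: (ha j); rewrite ej => /(leL_NL hM') [sj hj].
    have e1 : absL (a j) = M by apply/le_anti; rewrite hb /= (le_trans hMM hj).
    have : a j = NL M by apply: symL_eq; rewrite ?e1 // sgn_mkL sj hM.
    by move=> e; move: hN; rewrite -e memI'.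
  case: ifP => hP'; last by case: (contraN (maxabs_NL hM' (negbT hP'))).
  case: ifP => hN'; first by case: (contraN hN').
  exact: PL_le.
case: eqVneq => hM'; first exact: NL_le0.
case: ifP => hP'.
  case: ifP => _; first exact: NL_le0.
  exact: leL_trans (NL_le0 _) (le0_PL _).
have [j ej] := memI (maxabs_NL hM' (negbT hP')).
move: (ha j); rewrite ej => /(leL_NL hM') [sj hj].
by apply: NL_le; apply: le_trans hj (hb j).
Qed.
End Fam.

Lemma split_val (I : finType) (f : I -> L) :
  rule_val (split_rule f) f = spv (map f (enum I)).
Proof.
rewrite /rule_val /split_rule -split_spv; case: ifP => _.
  by rewrite setC0 enum_setT -enumT.
by rewrite setCT enum_set0.
Qed.

Lemma maxabs_cat (I J : finType) (a : I -> L) (b : J -> L) :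
  maxabs (map a (enum I)) <= maxabs (map (catfam a b) (enum {: I + J})).
Proof.
case: (maxabs_att (map a (enum I))) => [->|[x hx <-]]; first exact: le0x.
have [i <-] := memI hx.
by apply: maxabs_ge; exact: (memI' (catfam a b) (inl i)).
Qed.

Definition cL (x : L) (t : T) : int :=
  if (t != bot) && (absL x == t) then (if sgnL x then (-1)%R else 1%R) else 0%R.

Definition isLead (D : T -> int) (v : L) : Prop :=
  if absL v == bot then (forall t, D t = 0%R) else
  ((if sgnL v then (D (absL v) < 0)%R else (0 < D (absL v))%R) /\
   forall t, absL v < t -> D t = 0%R).

Lemma cL_ne (z : L) t : absL z != t -> cL z t = 0%R.
Proof. by move=> h; rewrite /cL (negPf h) andbF. Qed.

Lemma cL_gt (z : L) t : absL z < t -> cL z t = 0%R.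
Proof. by move=> h; apply: cL_ne; rewrite (lt_eqF h). Qed.

Lemma cL_self (z : L) : absL z != bot -> cL z (absL z) = if sgnL z then (-1)%R else 1%R.
Proof. by move=> h; rewrite /cL h eqxx. Qed.

Lemma cL_opp (x : L) t : (cL x t + cL (oppL x) t = 0)%R.
Proof.
rewrite /cL abs_opp sgn_opp; case: (boolP ((t != bot) && (absL x == t))) => //.
by case/andP => h /eqP e; subst t; rewrite h; case: (sgnL x).
Qed.

Lemma isLead_ext (D D' : T -> int) v : (forall t, D t = D' t) -> isLead D v -> isLead D' v.
Proof.
move=> e; rewrite /isLead; case: ifP => _; first by move=> h t; rewrite -e.
by rewrite -!e => -[h1 h2]; split => // t ht; rewrite -e h2.
Qed.

Lemma lead_pos (D : T -> int) t0 w : t0 != bot -> (0 < D t0)%R ->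
  (forall t, t0 < t -> D t = 0%R) -> isLead D w -> w = PL t0.
Proof.
move=> h0 hp hz; rewrite /isLead; case: ifP => hw.
  by move=> hD; move: hp; rewrite hD ltxx.
move=> [hs hz']; case: (ltgtP (absL w) t0) => hc.
- by move: hp; rewrite hz' // ltxx.
- by move: hs; rewrite hz //; case: (sgnL w); rewrite ltxx.
- move: hs; rewrite hc; case hsw: (sgnL w) => hs.
    by move: (lt_trans hs hp); rewrite ltxx.
  by apply: symL_eq; rewrite ?hsw ?sgn_mkL.
Qed.

Lemma lead_neg (D : T -> int) t0 w : t0 != bot -> (D t0 < 0)%R ->
  (forall t, t0 < t -> D t = 0%R) -> isLead D w -> w = NL t0.
Proof.
move=> h0 hp hz; rewrite /isLead; case: ifP => hw.
  by move=> hD; move: hp; rewrite hD ltxx.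
move=> [hs hz']; case: (ltgtP (absL w) t0) => hc.
- by move: hp; rewrite hz' // ltxx.
- by move: hs; rewrite hz //; case: (sgnL w); rewrite ltxx.
- move: hs; rewrite hc; case hsw: (sgnL w) => hs.
    by apply: symL_eq; rewrite ?hsw ?sgn_mkL ?h0.
  by move: (lt_trans hs hp); rewrite ltxx.
Qed.

Lemma lead_bound (D : T -> int) t0 w :
  (forall t, t0 < t -> D t = 0%R) -> isLead D w -> absL w <= t0.
Proof.
move=> hz; rewrite /isLead; case: ifP => hw.
  by move=> _; rewrite (eqP hw) le0x.
move=> [hs _]; rewrite leNgt; apply/negP => hc.
by move: hs; rewrite hz //; case: (sgnL w); rewrite ltxx.
Qed.

Lemma lead_unique (D : T -> int) v w : isLead D v -> isLead D w -> v = w.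
Proof.
move=> hv hw; move: (hv); rewrite /isLead; case: ifP => hbv.
  move=> hD; move: hw; rewrite /isLead; case: ifP => hbw.
    by move=> _; rewrite (abs_bot (eqP hbv)) (abs_bot (eqP hbw)).
  by move=> [hs _]; move: hs; rewrite hD; case: (sgnL w); rewrite ltxx.
move=> [hs hz]; have hb := negbT hbv.
case hsv: (sgnL v) hs => hs.
  rewrite (lead_neg hb hs hz hw); apply: symL_eq; by rewrite ?sgn_mkL ?hsv ?hb.
rewrite (lead_pos hb hs hz hw); apply: symL_eq; by rewrite ?sgn_mkL ?hsv.
Qed.

Lemma delta_pos (x y : L) : leL x y -> x = y \/
  exists t0, [/\ t0 != bot, absL x <= t0, absL y <= t0 & (0 < cL y t0 - cL x t0)%R].
Proof.
case: (eqVneq x y) => [->|nxy]; first by left.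
move=> hxy; right.
have nabs : sgnL x = sgnL y -> absL x != absL y.
  by move=> es; apply: contra nxy => /eqP ea; apply/eqP/symL_eq.
case hx: (sgnL x) hxy nabs; case hy: (sgnL y); rewrite /leL hx hy //= => hle nabs.
- have hlt : absL y < absL x by rewrite lt_neqAle hle eq_sym nabs.
  have hb : absL x != bot by apply: sgn_abs.
  exists (absL x); split; rewrite ?lexx ?(ltW hlt) ?(ltW hc) //.
  by rewrite cL_self // hx cL_ne ?(lt_eqF hlt).
- case: (ltgtP (absL x) (absL y)) => hc.
  + have hb : absL y != bot by rewrite gt_eqF // (le_lt_trans (le0x _) hc).
    exists (absL y); split; rewrite ?lexx ?(ltW hlt) ?(ltW hc) //.
    by rewrite cL_self // hy cL_ne ?(lt_eqF hc).
  + have hb : absL x != bot by apply: sgn_abs.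
    exists (absL x); split; rewrite ?lexx ?(ltW hlt) ?(ltW hc) //.
    by rewrite cL_self // hx cL_ne ?(lt_eqF hc).
  + have hb : absL x != bot by apply: sgn_abs.
    exists (absL x); split; rewrite -?hc ?lexx //.
    rewrite cL_self // hx hc cL_self ?hy; last by rewrite -hc.
    by [].
- have hlt : absL x < absL y by rewrite lt_neqAle hle nabs.
  have hb : absL y != bot by rewrite gt_eqF // (le_lt_trans (le0x _) hlt).
  exists (absL y); split; rewrite ?lexx ?(ltW hlt) ?(ltW hc) //.
  by rewrite cL_self // hy cL_ne ?(lt_eqF hlt).
Qed.

Lemma lead_mono (D D' : T -> int) (x y v w : L) :
  (forall t, D' t = D t - cL x t + cL y t)%R -> leL x y ->
  isLead D v -> isLead D' w -> leL v w.
Proof.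
move=> hD hxy hv hw.
case: (delta_pos hxy) => [exy|[t0 [h0 hx0 hy0 hd]]].
  subst y; have e : forall t, D t = D' t by move=> t; rewrite hD; lia.
  by rewrite (lead_unique (isLead_ext e hv) hw); apply: leL_refl.
have hsame : forall t, t0 < t -> D' t = D t.
  by move=> t ht; rewrite hD !cL_gt ?(le_lt_trans hx0 ht) ?(le_lt_trans hy0 ht) //; lia.
have hbig : (D t0 < D' t0)%R by rewrite hD; lia.
move: (hv); rewrite /isLead; case: ifP => hbv.
  move=> hz; rewrite (abs_bot (eqP hbv)).
  have p1 : (0 < D' t0)%R by move: hbig; rewrite hz.
  have p2 : forall t, t0 < t -> D' t = 0%R by move=> t ht; rewrite hsame // hz.
  by rewrite (lead_pos h0 p1 p2 hw) le0_PL.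
move=> [hs hz]; case: (ltgtP (absL v) t0) => hc.
- have p1 : (0 < D' t0)%R by move: hbig; rewrite hz.
  have p2 : forall t, t0 < t -> D' t = 0%R.
    by move=> t ht; rewrite hsame // hz // (lt_trans hc ht).
  by rewrite (lead_pos h0 p1 p2 hw); apply: le_PL (ltW hc).
- have : isLead D' v.
    rewrite /isLead hbv hsame //; split => // t ht; rewrite hsame ?hz //.
    exact: lt_trans hc ht.
  by move=> hv'; rewrite (lead_unique hv' hw); apply: leL_refl.
- have hz' : forall t, t0 < t -> D' t = 0%R.
    by move=> t ht; rewrite hsame // hz // hc.
  case hsv: (sgnL v) hs => hs.
    have -> : v = NL t0 by apply: symL_eq; rewrite ?sgn_mkL ?hsv ?h0.
    by apply: NL_le_abs; apply: lead_bound hz' hw.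
  have -> : v = PL t0 by apply: symL_eq; rewrite ?sgn_mkL ?hsv.
  have p1 : (0 < D' t0)%R by rewrite -hc; apply: lt_trans hs _; rewrite hc.
  by rewrite (lead_pos h0 p1 hz' hw) leL_refl.
Qed.

Lemma cL_zero t : cL zero t = 0%R.
Proof. by rewrite /cL abs_zero eq_sym andNb. Qed.

Lemma sum_count (s : seq L) (F : L -> int) (m : L) (e : int) :
  (forall x, x \in s -> F x = if x == m then e else 0%R) ->
  (\sum_(x <- s) F x = (count_mem m s)%:Z * e)%R.
Proof.
elim: s => [|y s IH] hs; first by rewrite big_nil mul0r.
rewrite big_cons IH; last by move=> x hx; apply: hs; rewrite inE hx orbT.
rewrite (hs y (mem_head _ _)) /=.
case: (y == m) => /=; last by rewrite add0r add0n.
by rewrite PoszD mulrDl mul1r.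
Qed.

Lemma lead_top (s : seq L) (M : T) (sg : bool) : M != bot ->
  (forall x, x \in s -> absL x <= M) -> mkL sg M \in s ->
  oppL (mkL sg M) \notin s ->
  isLead (fun t => \sum_(x <- s) cL x t)%R (mkL sg M).
Proof.
move=> hM hs hin hout; rewrite /isLead abs_mkL (negPf hM) sgn_mkL hM andbT.
split; last first.
  move=> t ht; rewrite big_seq big1 // => x hx; apply: cL_gt.
  exact: le_lt_trans (hs x hx) ht.
rewrite (sum_count (m := mkL sg M) (e := if sg then (-1)%R else 1%R)).
  have hc : (0 < count_mem (mkL sg M) s)%N by rewrite -has_count has_pred1.
  by case: sg {hin hout} hc => hc; lia.
move=> x hx; case: (eqVneq x (mkL sg M)) => [->|nx].
  by rewrite /cL abs_mkL sgn_mkL hM eqxx /= ?andbT.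
apply: cL_ne; apply/eqP => ex.
by move: hout; rewrite -(abs_eq_opp hM ex nx) hx.
Qed.

Lemma lead_list (s : seq L) : assocL s ->
  isLead (fun t => \sum_(x <- s) cL x t)%R (bigsym s).
Proof.
move=> ha; set M := maxabs s.
have hs : forall x, x \in s -> absL x <= M by move=> x; apply: maxabs_ge.
case: (eqVneq M bot) => hM.
  have hz := all_zero hM.
  have -> : bigsym s = zero by case: (bigsym_mem s) => // h; apply: hz.
  rewrite /isLead abs_zero eqxx => t; rewrite big_seq big1 // => x hx.
  by rewrite (hz x hx) cL_zero.
case hP: (PL M \in s); case hN: (NL M \in s).
- have [-> hform] := assoc_both hM hs hP hN ha.
  rewrite /isLead abs_zero eqxx => t.
  case: hform => ->; rewrite !big_cons big_nil addr0.
    by rewrite -oppPL cL_opp.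
  by rewrite -oppNL cL_opp.
- have hN' : oppL (mkL false M) \notin s.
    by change (mkL false M) with (PL M); rewrite oppPL hN.
  rewrite (bigsym_top hM hs hP hN'); exact: lead_top.
- have hN' : oppL (mkL true M) \notin s.
    by change (mkL true M) with (NL M); rewrite oppNL hP.
  rewrite (bigsym_top hM hs hN hN'); exact: lead_top.
- by move: hN; rewrite (maxabs_NL hM (negbT hP)).
Qed.

Lemma aux0 (k m : nat) : (k + 2 * m <= m)%N -> k = 0%N.
Proof. lia. Qed.

Section Strong.
Variable I : finType.

Definition Dset (f : I -> L) (K : {set I}) (t : T) : int := (\sum_(i in K) cL (f i) t)%R.

Lemma list_Dset (f : I -> L) (K : {set I}) t : (\sum_(x <- map f (enum K)) cL x t)%R = Dset f K t.
Proof. by rewrite big_map big_enum. Qed.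

Lemma step_prop (f : I -> L) (K : {set I}) :
  (assocL (map f (enum K)) -> strong_step f K = K) /\
  (~~ assocL (map f (enum K)) -> (#|strong_step f K| + 2 = #|K|)%N /\
     forall t, Dset f (strong_step f K) t = Dset f K t).
Proof.
split; first by move=> ha; rewrite /strong_step ha.
move=> na; rewrite /strong_step (negPf na).
set s := map f (enum K).
move: na; rewrite /assocL negb_or -ltnNge => /andP[hsz /negPn /eqP e].
rewrite -/s in hsz e.
have ne : s != [::] by apply/eqP => e0; move: hsz; rewrite e0.
have [sin sge] := supL_prop ne; have [iin ile] := infL_prop ne.
case/mapP: (sin) => i0; rewrite mem_enum => i0K ei0.
case: pickP => [i /andP[iK /eqP fi] | hnone]; last first.
  by move: (hnone i0); rewrite i0K -ei0 eqxx.
have [j [jK ji fj]] : exists j, [/\ j \in K, j != i & f j = oppL (supL s)].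
  case/mapP: (iin) => j0; rewrite mem_enum => j0K ej0.
  case: (eqVneq j0 i) => [ej|nj]; last by exists j0; rewrite -ej0 e oppK.
  have hsi : supL s = infL s by rewrite ej0 ej fi.
  have allsup : forall x, x \in s -> x = supL s.
    by move=> x hx; apply: leL_anti; rewrite ?sge // hsi ile.
  have : (0 < #|K :\ i|)%N.
    have := cardsD1 i K; rewrite iK cardE -(size_map f) -/s => hc.
    by move: hsz; rewrite hc; case: #|K :\ i|.
  case/card_gt0P => j; rewrite in_setD1 => /andP[ji jK].
  exists j; split => //.
  rewrite (allsup (f j)); last by apply: map_f; rewrite mem_enum.
  by rewrite {1}e -hsi.
case: pickP => [j' /andP[j'K /andP[j'i /eqP fj']] | hnone]; last first.
  by move: (hnone j); rewrite jK ji fj eqxx.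
have j'in : j' \in K :\ i by rewrite in_setD1 j'i j'K.
split.
  by rewrite (cardsD1 i K) (cardsD1 j' (K :\ i)) iK j'in; lia.
move=> t; rewrite /Dset [in RHS](big_setD1 i iK) [in RHS](big_setD1 j' j'in) /=.
rewrite fj' -fi; have := cL_opp (f i) t => h; by rewrite addrA h add0r.
Qed.

Lemma iter_prop (f : I -> L) n :
  (assocL (map f (enum (iter n (strong_step f) setT))) \/
   (#|iter n (strong_step f) setT| + 2 * n <= #|I|)%N) /\
  forall t, Dset f (iter n (strong_step f) setT) t = Dset f setT t.
Proof.
elim: n => [|n [IH1 IH2]] /=.
  by split => //; right; rewrite addn0 cardsT.
set K := iter n (strong_step f) setT in IH1 IH2 *.
have [h1 h2] := step_prop f K.
case: (boolP (assocL (map f (enum K)))) => ha.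
  by rewrite h1 //; split => //; left.
have [hc hD] := h2 ha; split; last by move=> t; rewrite hD IH2.
right; case: IH1 => [ha'|hle]; first by rewrite ha' in ha.
by rewrite mulnS addnA hc.
Qed.

Lemma strong_final (f : I -> L) :
  assocL (map f (enum (iter #|I| (strong_step f) setT))).
Proof.
case: (iter_prop f #|I|) => [[//|h] _].
have h0 : #|iter #|I| (strong_step f) setT| = 0%N := aux0 h.
by rewrite /assocL size_map -cardE h0.
Qed.

Definition sval_strong (f : I -> L) := rule_val (strong_rule f) f.

Lemma strong_lead (f : I -> L) : isLead (Dset f setT) (sval_strong f).
Proof.
rewrite /sval_strong /rule_val /strong_rule setCK.
apply: isLead_ext (lead_list (strong_final f)) => t.
by rewrite list_Dset (iter_prop f #|I|).2.
Qed.

Lemma Dset_change (g f : I -> L) k : (forall i, i != k -> g i = f i) ->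
  forall t, (Dset g setT t = Dset f setT t - cL (f k) t + cL (g k) t)%R.
Proof.
move=> h t; rewrite /Dset [in LHS](big_setD1 k) ?inE // [in RHS](big_setD1 k) ?inE //.
rewrite [X in (_ + X)%R = _](eq_bigr (fun i => cL (f i) t)).
  by rewrite /= [(cL (f k) t + _)%R]addrC addrK addrC.
by move=> i; rewrite in_setD1 => /andP[ik _]; rewrite h.
Qed.

Lemma strong_mono (a a' : I -> L) : (forall i, leL (a i) (a' i)) ->
  leL (sval_strong a) (sval_strong a').
Proof.
move=> ha.
pose h := fun (l : seq I) i => if i \in l then a' i else a i.
have chain : forall l w, isLead (Dset (h l) setT) w -> leL (sval_strong a) w.
  elim => [|x l IH] w hw.
    have e : forall t, Dset a setT t = Dset (h [::]) setT t.
      by move=> t; apply: eq_bigr => i _; rewrite /h in_nil.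
    by rewrite (lead_unique (isLead_ext e (strong_lead a)) hw); apply: leL_refl.
  have hu := strong_lead (h l).
  apply: leL_trans (IH _ hu) _.
  apply: (lead_mono (x := h l x) (y := h (x :: l) x)) _ _ hu hw.
    by apply: Dset_change => i ni; rewrite /h in_cons (negPf ni).
  by rewrite /h in_cons eqxx /=; case: ifP => _; [apply: leL_refl | apply: ha].
apply: (chain (enum I)); apply: isLead_ext (strong_lead a') => t.
by apply: eq_bigr => i _; rewrite /h mem_enum.
Qed.

Lemma evalt_in (lo hi : L) (a : I -> L) :
  (forall i, leL lo (a i) && leL (a i) hi) ->
  forall t : ptree I, leL lo (evalt a t) && leL (evalt a t) hi.
Proof. by move=> ha; elim => //= l IHl r IHr; apply: symmax_in. Qed.

Lemma keptt_nil (lo hi : L) (a : I -> L) :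
  (forall i, leL lo (a i) && leL (a i) hi) ->
  forall t : ptree I, keptt a t = [::] -> leL lo zero && leL zero hi.
Proof.
move=> ha; elim => //= l IHl r IHr; case: eqP => [e|_].
  move=> _; have /andP[h1 h2] := evalt_in ha l; have := evalt_in ha r.
  rewrite e => /andP[h3 h4].
  case/orP: (zero_between (evalt a l)) => /andP[p q].
    by rewrite (leL_trans h1 p) (leL_trans q h4).
  by rewrite (leL_trans h3 p) (leL_trans q h2).
by case hl: (keptt a l) => [|? ?] //= _; apply: IHl.
Qed.
End Strong.
End Aux.

Theorem proposition4 (d : Order.disp_t) (T : tbOrderType d) :
  (* (i) *)
  (forall rule : forall I : finType, (I -> symL T) -> {set I},
     is_comp_rule rule ->
     forall (I : finType) (a : I -> symL T),
       leL (infL (map a (enum I))) (rule_val (rule I a) a) /\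
       leL (rule_val (rule I a) a) (supL (map a (enum I)))) /\
  (* (ii) *)
  (forall (I : finType) (a a' : I -> symL T),
     (forall i, leL (a i) (a' i)) ->
     leL (rule_val (split_rule a) a) (rule_val (split_rule a') a') /\
     leL (rule_val (strong_rule a) a) (rule_val (strong_rule a') a')) /\
  (* (iii) *)
  (forall (I J : finType) (a : I -> symL T) (b : J -> symL T),
     let c := catfam a b in
     (absL (rule_val (split_rule a) a) <= absL (rule_val (split_rule c) c))%O \/
     rule_val (split_rule c) c = zeroL T).
Proof.
split.
  move=> rule hr I a; have [_ hr2] := hr I a.
  set s := map a (enum I).
  case: (eqVneq s [::]) => hs.
    rewrite hs /rule_val; case he: (enum (~: rule I a)) => [|i l].
      by rewrite /= leL_refl.
    by exfalso; move: (memI' a i); rewrite -/s hs.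
  have [_ ile] := infL_prop hs; have [_ sge] := supL_prop hs.
  have hab : forall i, leL (infL s) (a i) && leL (a i) (supL s).
    by move=> i; rewrite ile ?sge ?memI'.
  case: hr2 => [h0 | [t [_ ht]]].
    by move: hs; rewrite /s -size_eq0 size_map -cardE h0.
  rewrite /rule_val ht setCK.
  apply/andP; apply: bigsym_in.
    by move=> x /mapP [i _ ->]; exact: hab i.
  case hk: (keptt a t) => [|i l].
    by left; exact: keptt_nil hab t hk.
  right; have hi : i \in enum [set j in i :: l] by rewrite mem_enum inE mem_head.
  by case: (enum _) hi.
split.
  move=> I a a' ha; split; first by rewrite !split_val; apply: spv_mono.
  exact: (strong_mono ha).
move=> I J a b c; rewrite !split_val.
case: (eqVneq (spv (map c (enum {: I + J}))) (zeroL T)) => [e|ne]; [by right | left].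
have [h1 _] := spv_abs (map a (enum I)); have [_ h2] := spv_abs (map c (enum {: I + J})).
rewrite (h2 ne); exact: le_trans h1 (maxabs_cat a b).
Qed.
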